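(* Let $m\ge 2$, $\eta\in(0,1/m]$, $k>0$, $b\ge 0$ and $\tau\in(0,1)$. For all $\pi,\pi'\in\Delta_{m,\eta}$ with $\|\pi-\pi'\|_2\le b$ and all $z\in\Delta_{m,\tau}$, $$\log p_{k\pi}(z)\ \le\ \log p_{k\pi'}(z)+\sqrt{m}\,b\,k\,|\log\tau|+(m-1)\log\Gamma(k\eta)+\log\Gamma\big(k(1-(m-1)\eta)\big)-m\log\Gamma(k/m),$$ where $p_{k\pi}(z)=\Gamma(k)\prod_{i=1}^m z_i^{k\pi_i-1}/\Gamma(k\pi_i)$ denotes the density of $\mathrm{Dir}_k(\pi)$ at $z$.
   Context: For $n\in\mathbb{N}$ and $\eta\ge 0$, the $\eta$-restricted simplex is $\Delta_{n,\eta}=\{x\in\mathbb{R}^n:\sum_{i=1}^n x_i=1,\ x_i\ge\eta\ \forall i\}$. $\Gamma$ denotes the gamma function. For $k>0$ and $\pi\in\Delta_{n,\eta}$ with $\eta>0$, the Dirichlet mechanism $\mathrm{Dir}_k(\pi)$ outputs a random point of the simplex distributed according to the Dirichlet distribution with parameter vector $k\pi$, with density $\Gamma(k)\prod_{i=1}^n x_i^{k\pi_i-1}/\Gamma(k\pi_i)$. *)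

(* Defs.v *)
(* concrete reals R, with Coquelicot for the improper integral
   defining the Gamma function. Vectors of R^n are functions nat -> R, of
   which only the coordinates 0..n-1 matter. *)
From Stdlib Require Import Reals Lra.
From Coquelicot Require Import Coquelicot.
Open Scope R_scope.

Fixpoint sum_lt (n : nat) (f : nat -> R) : R :=
  match n with O => 0 | S p => sum_lt p f + f p end.

Fixpoint prod_lt (n : nat) (f : nat -> R) : R :=
  match n with O => 1 | S p => prod_lt p f * f p end.

Definition norm2 (n : nat) (x : nat -> R) : R :=
  sqrt (sum_lt n (fun i => x i ^ 2)).

Definition restricted_simplex (n : nat) (eta : R) (x : nat -> R) : Prop :=
  sum_lt n x = 1 /\ forall i : nat, (i < n)%nat -> eta <= x i.

Definition Gamma (x : R) : R :=
  RInt_gen (fun t => Rpower t (x - 1) * exp (- t))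
    (at_right 0) (Rbar_locally p_infty).

Definition dirichlet_density (n : nat) (k : R) (pi z : nat -> R) : R :=
  Gamma k * prod_lt n (fun i => Rpower (z i) (k * pi i - 1) / Gamma (k * pi i)).

(* Main.v *)
Require Import Defs.
From Stdlib Require Import Reals Lra Lia Classical_Prop.
From Coquelicot Require Import Coquelicot.
Open Scope R_scope.

Lemma exp_mono x y : x <= y -> exp x <= exp y.
Proof. intros [H|H]. left; now apply exp_increasing. right; now subst. Qed.

Lemma gen_lub (f : R -> R) (M : R) :
 (forall p q, 0 < p <= q -> ex_RInt f p q) ->
 (forall s, 0 < s -> 0 <= f s) ->
 (forall p q, 0 < p <= q -> RInt f p q <= M) ->
 exists l, (forall p q, 0<p<=q -> RInt f p q <= l) /\
   (forall B, (forall p q, 0<p<=q -> RInt f p q <= B) -> l <= B) /\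
   is_RInt_gen f (at_right 0) (Rbar_locally p_infty) l.
Proof.
intros Hex Hpos HM.
set (E := fun y => exists p q, 0<p<=q /\ y = RInt f p q).
destruct (completeness E) as [l [Hub Hlub]].
- exists M. intros y [p [q [Hpq ->]]]. now apply HM.
- exists (RInt f 1 1). exists 1, 1. split; [lra|auto].
- assert (Hup : forall p q, 0<p<=q -> RInt f p q <= l).
  { intros p q Hpq. apply Hub. exists p, q. auto. }
  exists l. split; [exact Hup|]. split.
  { intros B HB. apply Hlub. intros y [p [q [Hpq ->]]]. auto. }
  intros P [eps HP].
  assert (Happ : exists p0 q0, 0<p0<=q0 /\ l - eps < RInt f p0 q0).
  { destruct (Classical_Prop.classic (exists p0 q0, 0<p0<=q0 /\ l - eps < RInt f p0 q0)) as [H|H]; [exact H|].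
    exfalso. assert (l <= l - eps).
    { apply Hlub. intros y [p [q [Hpq ->]]].
      apply Rnot_lt_le. intro Hc. apply H. exists p, q. auto. }
    destruct eps; simpl in *; lra. }
  destruct Happ as [p0 [q0 [Hpq0 Hl0]]].
  apply (Filter_prod _ _ _ (fun a => 0 < a < p0) (fun b => q0 < b)).
  + assert (Hp0 : 0 < p0) by lra.
    exists (mkposreal p0 Hp0). intros u Hu Hu0. split; [exact Hu0|].
    unfold ball in Hu; simpl in Hu. unfold AbsRing_ball, abs, minus, plus, opp in Hu; simpl in Hu.
    apply Rabs_def2 in Hu. lra.
  + exists q0. auto.
  + intros a b Ha Hb. simpl.
    assert (Hab : ex_RInt f a b) by (apply Hex; lra).
    exists (RInt f a b). split; [exact (RInt_correct f a b Hab)|].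
    apply HP.
    assert (H1 : RInt f a b <= l) by (apply Hup; lra).
    assert (H2 : RInt f p0 q0 <= RInt f a b).
    { rewrite <- (RInt_Chasles f a p0 b) by (apply Hex; lra).
      rewrite <- (RInt_Chasles f p0 q0 b) by (apply Hex; lra).
      assert (0 <= RInt f a p0).
      { apply RInt_ge_0; [lra| apply Hex; lra | intros; apply Hpos; lra]. }
      assert (0 <= RInt f q0 b).
      { apply RInt_ge_0; [lra| apply Hex; lra | intros; apply Hpos; lra]. }
      unfold plus; simpl. lra. }
    unfold ball; simpl. unfold AbsRing_ball, abs, minus, plus, opp; simpl.
    apply Rabs_def1; destruct eps; simpl in *; lra.
Qed.

Definition h (x s : R) := exp ((x-1)*ln s - s).

Lemma h_ex x p q : 0 < p <= q -> ex_RInt (h x) p q.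
Proof.
intros Hpq. apply (ex_RInt_continuous (V:=R_CompleteNormedModule)). intros z Hz.
rewrite Rmin_left in Hz by lra. rewrite Rmax_right in Hz by lra.
apply (ex_derive_continuous (K:=R_AbsRing) (V:=R_NormedModule)). unfold h. auto_derive. lra.
Qed.

Lemma f_eq x s : 0 < s -> Rpower s (x-1) * exp (-s) = h x s.
Proof. intros. unfold Rpower, h. rewrite <- exp_plus. f_equal; try ring. Qed.

Lemma ln_le_lin u : 0 < u -> ln u <= u - 1.
Proof. intros Hu. pose proof (exp_ineq1_le (ln u)). rewrite exp_ln in H by lra. lra. Qed.

Definition c0 x := 1 + (x+1)*(ln (x+1) - 1).
Definition FF x s := exp (c0 x) * exp (x * ln (s/(1+s))) / x.
Definition dF x s := exp (c0 x) * exp (x * ln (s/(1+s))) / (s*(1+s)).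

Lemma dF_der x s : 0 < x -> 0 < s -> is_derive (FF x) s (dF x s).
Proof.
intros Hx Hs. unfold FF, dF. auto_derive.
- repeat split; try lra. apply Rmult_lt_0_compat; [lra|]. apply Rinv_0_lt_compat; lra.
- unfold Rdiv. field. repeat split; lra.
Qed.

Lemma h_le_dF x s : 0 < x -> 0 < s -> h x s <= dF x s.
Proof.
intros Hx Hs.
assert (E : dF x s = exp (c0 x + x*(ln s - ln (1+s)) - (ln s + ln (1+s)))).
{ unfold dF. rewrite ln_div by lra. unfold Rminus at 2. rewrite exp_plus, exp_Ropp, exp_plus.
  rewrite exp_plus, !exp_ln by lra. field. lra. }
rewrite E. unfold h. apply exp_mono.
assert (H1 := ln_le_lin ((1+s)/(x+1))).
rewrite ln_div in H1 by lra.
assert (H2 : (x+1)*(ln(1+s) - ln(x+1)) <= (x+1)*((1+s)/(x+1) - 1)).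
{ apply Rmult_le_compat_l; [lra|]. apply H1. apply Rdiv_lt_0_compat; lra. }
replace ((x+1)*((1+s)/(x+1) - 1)) with (s - x) in H2 by (field; lra).
unfold c0. nra.
Qed.

Lemma dF_cont x s : 0 < x -> 0 < s -> continuous (dF x) s.
Proof.
intros Hx Hs. apply (ex_derive_continuous (K:=R_AbsRing) (V:=R_NormedModule)).
unfold dF. auto_derive. repeat split; try lra.
- apply Rmult_lt_0_compat; [lra|]. apply Rinv_0_lt_compat; lra.
- apply Rgt_not_eq. apply Rmult_lt_0_compat; lra.
Qed.

Lemma h_bound x p q : 0 < x -> 0 < p <= q -> RInt (h x) p q <= exp (c0 x) / x.
Proof.
intros Hx Hpq.
assert (HI : is_RInt (dF x) p q (FF x q - FF x p)).
{ apply (is_RInt_derive (V:=R_CompleteNormedModule) (FF x) (dF x)).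
  - intros z Hz. rewrite Rmin_left in Hz by lra. rewrite Rmax_right in Hz by lra.
    apply dF_der; lra.
  - intros z Hz. rewrite Rmin_left in Hz by lra. rewrite Rmax_right in Hz by lra.
    apply dF_cont; lra. }
apply Rle_trans with (RInt (dF x) p q).
- apply RInt_le; [lra| apply h_ex; lra | eexists; exact HI |].
  intros z Hz. apply h_le_dF; lra.
- rewrite (is_RInt_unique _ _ _ _ HI).
  assert (0 <= FF x p).
  { unfold FF. apply Rlt_le. apply Rdiv_lt_0_compat; [|lra]. apply Rmult_lt_0_compat; apply exp_pos. }
  assert (FF x q <= exp (c0 x) / x).
  { unfold FF. unfold Rdiv. apply Rmult_le_compat_r; [left; apply Rinv_0_lt_compat; lra|].
    rewrite <- (Rmult_1_r (exp (c0 x))) at 2. apply Rmult_le_compat_l; [left; apply exp_pos|].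
    apply Rle_trans with (exp 0); [|rewrite exp_0; lra]. apply exp_mono.
    assert (ln (q * / (1+q)) <= 0).
    { rewrite <- ln_1. apply ln_le. apply Rmult_lt_0_compat; [lra|apply Rinv_0_lt_compat; lra].
      apply Rmult_le_reg_r with (1+q); [lra|]. rewrite Rmult_assoc, Rinv_l by lra. lra. }
    assert (x * ln (q * / (1+q)) <= x * 0) by (apply Rmult_le_compat_l; lra). lra. }
  unfold minus, plus, opp; simpl. lra.
Qed.

Lemma Gamma_char x : 0 < x ->
  (forall p q, 0<p<=q -> RInt (h x) p q <= Gamma x) /\
  (forall B, (forall p q, 0<p<=q -> RInt (h x) p q <= B) -> Gamma x <= B).
Proof.
intros Hx.
set (f := fun t => Rpower t (x-1) * exp (-t)).
assert (Hfh : forall p q, 0 < p <= q -> RInt f p q = RInt (h x) p q).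
{ intros p q Hpq. apply RInt_ext. intros z Hz.
  rewrite Rmin_left in Hz by lra. apply f_eq. lra. }
destruct (gen_lub f (exp (c0 x) / x)) as [l [H1 [H2 H3]]].
- intros p q Hpq. apply (ex_RInt_ext (h x)); [|apply h_ex; lra].
  intros z Hz. rewrite Rmin_left in Hz by lra. symmetry. apply f_eq. lra.
- intros s Hs. unfold f, Rpower. apply Rlt_le, Rmult_lt_0_compat; apply exp_pos.
- intros p q Hpq. rewrite Hfh by lra. apply h_bound; lra.
- assert (HG : Gamma x = l).
  { unfold Gamma. apply (is_RInt_gen_unique (V:=R_CompleteNormedModule)). exact H3. }
  rewrite HG. split.
  + intros p q Hpq. rewrite <- Hfh by lra. auto.
  + intros B HB. apply H2. intros p q Hpq. rewrite Hfh by lra. auto.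
Qed.


Lemma Gamma_pos x : 0 < x -> 0 < Gamma x.
Proof.
intros Hx. destruct (Gamma_char x Hx) as [H1 _].
set (c := exp (- Rabs (x-1) * ln 2 - 2)).
apply Rlt_le_trans with (RInt (fun _ => c) 1 2).
- rewrite RInt_const. unfold scal; simpl. unfold mult; simpl. unfold c.
  assert (0 < exp (- Rabs (x - 1) * ln 2 - 2)) by apply exp_pos. lra.
- apply Rle_trans with (RInt (h x) 1 2); [|apply H1; lra].
  apply RInt_le; [lra | apply ex_RInt_const | apply h_ex; lra |].
  intros s Hs. unfold c, h. apply exp_mono.
  assert (0 <= ln s). { rewrite <- ln_1. apply ln_le; lra. }
  assert (ln s <= ln 2). { apply ln_le; lra. }
  pose proof (Rle_abs (x-1)). pose proof (Rabs_pos (x-1)).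
  assert (- (x-1) <= Rabs (x-1)) by (rewrite <- Rabs_Ropp; apply Rle_abs).
  nra.
Qed.

Lemma exp_convex t X Y : 0 <= t <= 1 ->
  exp (t*X + (1-t)*Y) <= t * exp X + (1-t) * exp Y.
Proof.
intros Ht. set (m := t*X + (1-t)*Y).
assert (HX : exp m * (1 + (X - m)) <= exp X).
{ replace (exp X) with (exp m * exp (X - m)) by (rewrite <- exp_plus; f_equal; ring).
  apply Rmult_le_compat_l; [left; apply exp_pos| apply exp_ineq1_le]. }
assert (HY : exp m * (1 + (Y - m)) <= exp Y).
{ replace (exp Y) with (exp m * exp (Y - m)) by (rewrite <- exp_plus; f_equal; ring).
  apply Rmult_le_compat_l; [left; apply exp_pos| apply exp_ineq1_le]. }
assert (t * (exp m * (1 + (X - m))) <= t * exp X) by (apply Rmult_le_compat_l; lra).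
assert ((1-t) * (exp m * (1 + (Y - m))) <= (1-t) * exp Y) by (apply Rmult_le_compat_l; lra).
assert (E : t * (exp m * (1 + (X - m))) + (1-t) * (exp m * (1 + (Y - m))) = exp m)
  by (unfold m; ring).
lra.
Qed.

Lemma Gamma_logconv a b t : 0 < a -> 0 < b -> 0 <= t <= 1 ->
  Gamma (t*a + (1-t)*b) <= exp (t * ln (Gamma a) + (1-t) * ln (Gamma b)).
Proof.
intros Ha Hb Ht.
assert (Hc : 0 < t*a + (1-t)*b) by nra.
set (c := t*a + (1-t)*b) in *.
set (u := ln (Gamma b) - ln (Gamma a)).
set (al := t * exp ((1-t)*u)). set (be := (1-t) * exp (-t*u)).
destruct (Gamma_char a Ha) as [Ga _]. destruct (Gamma_char b Hb) as [Gb _].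
destruct (Gamma_char c Hc) as [_ Gc].
assert (HA := Gamma_pos a Ha). assert (HB := Gamma_pos b Hb).
assert (Hal : 0 <= al) by (unfold al; apply Rmult_le_pos; [lra|left; apply exp_pos]).
assert (Hbe : 0 <= be) by (unfold be; apply Rmult_le_pos; [lra|left; apply exp_pos]).
assert (Efin : al * Gamma a + be * Gamma b = exp (t * ln (Gamma a) + (1-t) * ln (Gamma b))).
{ unfold al, be, u.
  assert (EA : Gamma a = exp (ln (Gamma a))) by (rewrite exp_ln; lra).
  assert (EB : Gamma b = exp (ln (Gamma b))) by (rewrite exp_ln; lra).
  set (LA := ln (Gamma a)) in *. set (LB := ln (Gamma b)) in *.
  rewrite EA at 1. rewrite EB at 1.
  rewrite !Rmult_assoc, <- !exp_plus.
  replace ((1 - t) * (LB - LA) + LA) with (t * LA + (1-t) * LB) by ring.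
  replace (- t * (LB - LA) + LB) with (t * LA + (1-t) * LB) by ring.
  set (E := exp (t * LA + (1 - t) * LB)). clearbody E. ring. }
rewrite <- Efin. apply Gc. clear Gc Efin. clearbody u.
set (GA := Gamma a) in *. set (GB := Gamma b) in *. clearbody GA GB.
intros p q Hpq.
apply Rle_trans with (RInt (fun s => plus (scal al (h a s)) (scal be (h b s))) p q).
- apply RInt_le; [lra | apply h_ex; lra | |].
  + apply (ex_RInt_plus (V:=R_NormedModule)); apply (ex_RInt_scal (V:=R_NormedModule)); apply h_ex; lra.
  + intros s Hs. unfold plus, scal; simpl. unfold mult; simpl.
    unfold h, al, be.
    rewrite !Rmult_assoc, <- !exp_plus.
    replace ((c - 1) * ln s - s) with
      (t * ((1-t)*u + ((a-1)*ln s - s)) + (1-t) * (-t*u + ((b-1)*ln s - s)))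
      by (unfold c; ring).
    apply exp_convex; lra.
- rewrite (RInt_plus (V:=R_CompleteNormedModule)) by (apply (ex_RInt_scal (V:=R_NormedModule)); apply h_ex; lra).
  rewrite !(RInt_scal (V:=R_CompleteNormedModule)) by (apply h_ex; lra).
  unfold plus, scal; simpl. unfold mult; simpl.
  assert (RInt (h a) p q <= GA) by (apply Ga; lra).
  assert (RInt (h b) p q <= GB) by (apply Gb; lra).
  assert (al * RInt (h a) p q <= al * GA) by (apply Rmult_le_compat_l; lra).
  assert (be * RInt (h b) p q <= be * GB) by (apply Rmult_le_compat_l; lra).
  lra.
Qed.


Lemma sum_ext n f g : (forall i, (i < n)%nat -> f i = g i) -> sum_lt n f = sum_lt n g.
Proof. induction n; simpl; intros H; auto. rewrite IHn by (intros; apply H; lia). rewrite H by lia. auto. Qed.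

Lemma sum_le n f g : (forall i, (i < n)%nat -> f i <= g i) -> sum_lt n f <= sum_lt n g.
Proof. induction n; simpl; intros H; [lra|]. assert (f n <= g n) by (apply H; lia).
 assert (sum_lt n f <= sum_lt n g) by (apply IHn; intros; apply H; lia). lra. Qed.

Lemma sum_plus n f g : sum_lt n (fun i => f i + g i) = sum_lt n f + sum_lt n g.
Proof. induction n; simpl; [ring|]. rewrite IHn. ring. Qed.

Lemma sum_minus n f g : sum_lt n (fun i => f i - g i) = sum_lt n f - sum_lt n g.
Proof. induction n; simpl; [ring|]. rewrite IHn. ring. Qed.

Lemma sum_scal n c f : sum_lt n (fun i => c * f i) = c * sum_lt n f.
Proof. induction n; simpl; [ring|]. rewrite IHn. ring. Qed.

Lemma sum_const n a : sum_lt n (fun _ => a) = INR n * a.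
Proof. induction n; simpl sum_lt; [simpl; ring|]. rewrite IHn, S_INR. ring. Qed.

Lemma sum_lin n a c f : sum_lt n (fun i => a + c * f i) = INR n * a + c * sum_lt n f.
Proof. rewrite sum_plus, sum_scal, sum_const. ring. Qed.

Lemma sum_lb n f eta : (forall j, (j < n)%nat -> eta <= f j) -> INR n * eta <= sum_lt n f.
Proof. intros H. rewrite <- sum_const. apply sum_le. auto. Qed.

Lemma sum_pos n f : (forall j, (j < n)%nat -> 0 < f j) -> (0 < n)%nat -> 0 < sum_lt n f.
Proof.
induction n; intros H Hn; [lia|]. simpl.
destruct n. { simpl. assert (0 < f 0%nat) by (apply H; lia). lra. }
assert (0 < sum_lt (S n) f) by (apply IHn; [intros; apply H; lia| lia]).
assert (0 < f (S n)) by (apply H; lia). lra.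
Qed.

Lemma sum_other n f eta i : (i < n)%nat -> (forall j, (j < n)%nat -> eta <= f j) ->
  f i + INR (n - 1) * eta <= sum_lt n f.
Proof.
induction n; intros Hi H; [lia|]. simpl sum_lt.
replace (S n - 1)%nat with n by lia.
destruct (Nat.eq_dec i n) as [->|Hne].
- assert (INR n * eta <= sum_lt n f) by (apply sum_lb; intros; apply H; lia). lra.
- assert (Hi' : (i < n)%nat) by lia.
  assert (f i + INR (n - 1) * eta <= sum_lt n f) by (apply IHn; [lia| intros; apply H; lia]).
  assert (eta <= f n) by (apply H; lia).
  replace (INR n) with (INR (n-1) + 1). lra.
  rewrite <- S_INR. f_equal. lia.
Qed.

Lemma prod_pos n f : (forall j, (j < n)%nat -> 0 < f j) -> 0 < prod_lt n f.
Proof. induction n; simpl; intros H; [lra|]. apply Rmult_lt_0_compat; [apply IHn; intros; apply H; lia| apply H; lia]. Qed.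

Lemma ln_prod n f : (forall j, (j < n)%nat -> 0 < f j) -> ln (prod_lt n f) = sum_lt n (fun i => ln (f i)).
Proof.
induction n; simpl; intros H; [apply ln_1|].
rewrite ln_mult; [|apply prod_pos; intros; apply H; lia| apply H; lia].
rewrite IHn by (intros; apply H; lia). auto.
Qed.

Section Conv.
Variable g : R -> R.
Hypothesis Hconv : forall a b t, 0 < a -> 0 < b -> 0 <= t <= 1 ->
  g (t*a + (1-t)*b) <= t * g a + (1-t) * g b.

Lemma jensen p x : (forall i, (i < S p)%nat -> 0 < x i) ->
  INR (S p) * g (sum_lt (S p) x / INR (S p)) <= sum_lt (S p) (fun i => g (x i)).
Proof.
induction p; intros H.
- simpl. replace ((0 + x 0%nat) / 1) with (x 0%nat) by field. lra.
- set (n := INR (S p)). set (A := sum_lt (S p) x).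
  assert (Hn : 0 < n) by (unfold n; apply lt_0_INR; lia).
  assert (HA : 0 < A) by (apply sum_pos; [intros; apply H; lia| lia]).
  assert (IH : n * g (A / n) <= sum_lt (S p) (fun i => g (x i))) by (apply IHp; intros; apply H; lia).
  assert (Hx : 0 < x (S p)) by (apply H; lia).
  change (sum_lt (S (S p)) x) with (A + x (S p)).
  change (sum_lt (S (S p)) (fun i => g (x i))) with (sum_lt (S p) (fun i => g (x i)) + g (x (S p))).
  rewrite S_INR. fold n.
  assert (Hc := Hconv (A / n) (x (S p)) (n / (n+1))).
  replace (n / (n + 1) * (A / n) + (1 - n / (n + 1)) * x (S p)) with ((A + x (S p)) / (n + 1)) in Hc by (field; lra).
  assert (Hc' : g ((A + x (S p)) / (n + 1)) <= n / (n + 1) * g (A / n) + (1 - n / (n + 1)) * g (x (S p))).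
  { apply Hc. apply Rdiv_lt_0_compat; lra. lra.
    split. apply Rlt_le, Rdiv_lt_0_compat; lra.
    apply Rmult_le_reg_r with (n+1); [lra|]. unfold Rdiv. rewrite Rmult_assoc, Rinv_l by lra. lra. }
  apply Rmult_le_compat_l with (r := n+1) in Hc'; [|lra].
  replace ((n + 1) * (n / (n + 1) * g (A / n) + (1 - n / (n + 1)) * g (x (S p)))) with
     (n * g (A / n) + g (x (S p))) in Hc' by (field; lra).
  lra.
Qed.

Lemma upper m x eta : (1 <= m)%nat -> 0 < eta -> sum_lt m x = 1 -> (forall i, (i < m)%nat -> eta <= x i) ->
  sum_lt m (fun i => g (x i)) <= INR (m - 1) * g eta + g (1 - INR (m - 1) * eta).
Proof.
intros Hm Heta Hs Hx.
set (L := 1 - INR (m - 1) * eta).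
assert (Hm1 : INR (m - 1) = INR m - 1) by (rewrite minus_INR by lia; simpl; ring).
assert (HxL : forall i, (i < m)%nat -> x i <= L).
{ intros i Hi. assert (H := sum_other m x eta i Hi Hx). unfold L. lra. }
assert (Hlb := sum_lb m x eta Hx).
assert (HLe : L - eta = 1 - INR m * eta) by (unfold L; rewrite Hm1; ring).
destruct (Rlt_or_le 0 (L - eta)) as [Hpos | Hneg].
- set (D := (g L - g eta) / (L - eta)).
  apply Rle_trans with (sum_lt m (fun i => (g eta - eta * D) + D * x i)).
  + apply sum_le. intros i Hi.
    set (t := (x i - eta) / (L - eta)).
    assert (Hxi := Hx i Hi). assert (HxLi := HxL i Hi).
    assert (Ht : 0 <= t <= 1).
    { unfold t. split. unfold Rdiv; apply Rmult_le_pos; [lra| left; apply Rinv_0_lt_compat; lra].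
      apply Rmult_le_reg_r with (L - eta); [lra|]. unfold Rdiv. rewrite Rmult_assoc, Rinv_l by lra. lra. }
    replace (x i) with (t * L + (1 - t) * eta) at 1 by (unfold t; field; lra).
    apply Rle_trans with (t * g L + (1-t) * g eta).
    * apply Hconv; lra.
    * right. unfold t, D. field. lra.
  + rewrite sum_lin, Hs. unfold D. rewrite Hm1. clearbody L.
    replace L with (1 - INR m * eta + eta) by lra. right. field. lra.
- assert (HL : L = eta) by lra.
  apply Rle_trans with (sum_lt m (fun _ => g eta)).
  + apply sum_le. intros i Hi. assert (x i = eta) by (assert (H1 := Hx i Hi); assert (H2 := HxL i Hi); lra).
    rewrite H. lra.
  + rewrite sum_const, HL, Hm1. lra.
Qed.
End Conv.


Lemma g_conv k : 0 < k -> forall a b t, 0 < a -> 0 < b -> 0 <= t <= 1 ->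
  ln (Gamma (k*(t*a + (1-t)*b))) <= t * ln (Gamma (k*a)) + (1-t) * ln (Gamma (k*b)).
Proof.
intros Hk a b t Ha Hb Ht.
replace (k*(t*a + (1-t)*b)) with (t*(k*a) + (1-t)*(k*b)) by ring.
rewrite <- (ln_exp (t * ln (Gamma (k*a)) + (1-t) * ln (Gamma (k*b)))).
assert (0 < k*a) by (apply Rmult_lt_0_compat; lra).
assert (0 < k*b) by (apply Rmult_lt_0_compat; lra).
apply ln_le.
- apply Gamma_pos.
  assert (0 <= (1-t)*(k*b)) by (apply Rmult_le_pos; lra).
  assert (0 <= t*(k*a)) by (apply Rmult_le_pos; lra).
  destruct (Req_dec t 0) as [->|Ht0]; [lra|].
  assert (0 < t*(k*a)) by (apply Rmult_lt_0_compat; lra). lra.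
- apply Gamma_logconv; lra.
Qed.

Lemma ln_density m k pi z : 0 < k -> (forall i, (i < m)%nat -> 0 < pi i) ->
  (forall i, (i < m)%nat -> 0 < z i) ->
  ln (dirichlet_density m k pi z) =
  ln (Gamma k) + sum_lt m (fun i => (k * pi i - 1) * ln (z i) - ln (Gamma (k * pi i))).
Proof.
intros Hk Hpi Hz. unfold dirichlet_density.
assert (Hpos : forall i, (i < m)%nat -> 0 < Rpower (z i) (k * pi i - 1) / Gamma (k * pi i)).
{ intros i Hi. apply Rdiv_lt_0_compat. unfold Rpower; apply exp_pos.
  apply Gamma_pos. apply Rmult_lt_0_compat; auto. }
rewrite ln_mult; [| apply Gamma_pos; auto | apply prod_pos; auto].
rewrite ln_prod by auto. f_equal. apply sum_ext. intros i Hi.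
rewrite ln_div; [| unfold Rpower; apply exp_pos | apply Gamma_pos, Rmult_lt_0_compat; auto].
unfold Rpower. rewrite ln_exp. auto.
Qed.

Lemma abs_sum_bound m (d : nat -> R) b : 0 <= b ->
  sqrt (sum_lt m (fun i => d i ^ 2)) <= b ->
  sum_lt m (fun i => Rabs (d i)) <= sqrt (INR m) * b.
Proof.
intros Hb Hn.
set (SS := sum_lt m (fun i => d i ^ 2)) in *.
assert (HS0 : 0 <= SS).
{ unfold SS. rewrite <- (Rmult_0_r (INR m)). apply sum_lb. intros. apply pow2_ge_0. }
assert (HS : SS <= b * b).
{ rewrite <- (sqrt_sqrt SS) by lra. apply Rmult_le_compat; auto; apply sqrt_pos. }
assert (Hlam : forall lam, 0 < lam -> sum_lt m (fun i => Rabs (d i)) <= (lam * (b*b) + INR m / lam) / 2).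
{ intros lam Hl.
  apply Rle_trans with (sum_lt m (fun i => / (2*lam) + (lam/2) * d i ^ 2)).
  - apply sum_le. intros i Hi.
    assert (0 <= (lam * Rabs (d i) - 1)^2) by apply pow2_ge_0.
    assert (E : Rabs (d i) ^ 2 = d i ^ 2) by (replace (Rabs (d i) ^ 2) with (Rsqr (Rabs (d i))) by (unfold Rsqr; ring);
        rewrite <- Rsqr_abs; unfold Rsqr; ring).
    apply Rmult_le_reg_l with (2*lam); [lra|].
    replace (2 * lam * (/ (2 * lam) + lam / 2 * d i ^ 2)) with (1 + lam^2 * Rabs (d i) ^ 2)
      by (rewrite E; field; lra).
    nra.
  - rewrite sum_lin. fold SS.
    assert (lam / 2 * SS <= lam / 2 * (b * b)) by (apply Rmult_le_compat_l; lra).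
    apply Rle_trans with (INR m * / (2 * lam) + lam / 2 * (b*b)); [lra|].
    right; field; lra. }
destruct m as [|m']. { simpl. rewrite sqrt_0. lra. }
set (m := S m') in *.
assert (Hm : 0 < INR m) by (apply lt_0_INR; unfold m; lia).
set (sm := sqrt (INR m)).
assert (Hsm : 0 < sm) by (apply sqrt_lt_R0; lra).
assert (Esm : sm * sm = INR m) by (apply sqrt_sqrt; lra).
set (D := sum_lt m (fun i => Rabs (d i))) in *.
destruct (Rlt_or_le 0 b) as [Hb0|Hb0].
- assert (H := Hlam (sm / b) ltac:(apply Rdiv_lt_0_compat; lra)).
  rewrite <- Esm in H. replace ((sm / b * (b * b) + sm * sm / (sm / b)) / 2) with (sm * b) in H by (field; lra).
  exact H.
- assert (b = 0) by lra. subst b. rewrite Rmult_0_r.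
  assert (HD0 : 0 <= D) by (unfold D; rewrite <- (Rmult_0_r (INR m)); apply sum_lb; intros; apply Rabs_pos).
  destruct (Rlt_or_le 0 D) as [HD|HD]; [|lra].
  assert (H := Hlam (INR m / D) ltac:(apply Rdiv_lt_0_compat; lra)).
  replace ((INR m / D * (0 * 0) + INR m / (INR m / D)) / 2) with (D / 2) in H by (field; lra).
  lra.
Qed.


Theorem mainTheorem3 (m : nat) (eta k b tau : R) (pi pi' z : nat -> R) :
  (2 <= m)%nat ->
  0 < eta -> eta <= 1 / INR m ->
  0 < k -> 0 <= b -> 0 < tau < 1 ->
  restricted_simplex m eta pi ->
  restricted_simplex m eta pi' ->
  norm2 m (fun i => pi i - pi' i) <= b ->
  restricted_simplex m tau z ->
  ln (dirichlet_density m k pi z)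
  <= ln (dirichlet_density m k pi' z)
     + sqrt (INR m) * b * k * Rabs (ln tau)
     + INR (m - 1) * ln (Gamma (k * eta))
     + ln (Gamma (k * (1 - INR (m - 1) * eta)))
     - INR m * ln (Gamma (k / INR m)).
Proof.
intros Hm Heta Hetam Hk Hb Htau [Hs1 Hp1] [Hs2 Hp2] Hn [Hsz Hz].
assert (Pp1 : forall i, (i < m)%nat -> 0 < pi i) by (intros i Hi; specialize (Hp1 i Hi); lra).
assert (Pp2 : forall i, (i < m)%nat -> 0 < pi' i) by (intros i Hi; specialize (Hp2 i Hi); lra).
assert (Pz : forall i, (i < m)%nat -> 0 < z i) by (intros i Hi; specialize (Hz i Hi); lra).
rewrite (ln_density m k pi z Hk Pp1 Pz), (ln_density m k pi' z Hk Pp2 Pz).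
rewrite !sum_minus.
assert (Hlin : sum_lt m (fun i => (k * pi i - 1) * ln (z i)) - sum_lt m (fun i => (k * pi' i - 1) * ln (z i))
   <= sqrt (INR m) * b * k * Rabs (ln tau)).
{ rewrite <- sum_minus.
  apply Rle_trans with (sum_lt m (fun i => (k * Rabs (ln tau)) * Rabs (pi i - pi' i))).
  - apply sum_le. intros i Hi.
    assert (Hz1 : z i <= 1).
    { assert (H := sum_other m z tau i Hi Hz). assert (0 <= INR (m-1) * tau).
      { apply Rmult_le_pos; [apply pos_INR| lra]. } lra. }
    assert (Hlz : ln (z i) <= 0) by (rewrite <- ln_1; apply ln_le; [apply Pz; auto| lra]).
    assert (Hlt : ln tau <= ln (z i)) by (apply ln_le; [lra| apply Hz; auto]).
    assert (Hlt0 : ln tau < 0) by (rewrite <- ln_1; apply ln_increasing; lra).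
    rewrite (Rabs_left (ln tau)) by lra.
    set (d := pi i - pi' i).
    replace ((k * pi i - 1) * ln (z i) - (k * pi' i - 1) * ln (z i)) with (k * (d * ln (z i))) by (unfold d; ring).
    rewrite Rmult_assoc. apply Rmult_le_compat_l; [lra|].
    pose proof (Rle_abs d). assert (- d <= Rabs d) by (rewrite <- Rabs_Ropp; apply Rle_abs).
    nra.
  - rewrite sum_scal.
    assert (H := abs_sum_bound m (fun i => pi i - pi' i) b Hb Hn).
    assert (k * Rabs (ln tau) * sum_lt m (fun i => Rabs (pi i - pi' i)) <= k * Rabs (ln tau) * (sqrt (INR m) * b)).
    { apply Rmult_le_compat_l; [apply Rmult_le_pos; [lra| apply Rabs_pos] | exact H]. }
    lra. }
assert (U := upper (fun x => ln (Gamma (k*x))) (g_conv k Hk) m pi' eta ltac:(lia) Heta Hs2 Hp2).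
cbv beta in U.
destruct m as [|p]; [lia|].
assert (J := jensen (fun x => ln (Gamma (k*x))) (g_conv k Hk) p pi Pp1).
cbv beta in J. rewrite Hs1 in J.
replace (k * (1 / INR (S p))) with (k / INR (S p)) in J by (field; apply not_0_INR; lia).
set (A := sum_lt (S p) (fun i => (k * pi i - 1) * ln (z i))) in *.
set (B := sum_lt (S p) (fun i => (k * pi' i - 1) * ln (z i))) in *.
set (C := sum_lt (S p) (fun i => ln (Gamma (k * pi i)))) in *.
set (D := sum_lt (S p) (fun i => ln (Gamma (k * pi' i)))) in *.
set (E := sqrt (INR (S p)) * b * k * Rabs (ln tau)) in *.
set (F1 := INR (S p - 1) * ln (Gamma (k * eta))) in *.
set (F2 := ln (Gamma (k * (1 - INR (S p - 1) * eta)))) in *.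
set (F3 := INR (S p) * ln (Gamma (k / INR (S p)))) in *.
set (G0 := ln (Gamma k)).
clearbody A B C D E F1 F2 F3 G0.
lra.
Qed.
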